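(* For any Markov policy $\pi$ and every $h\in[H]$ (for claim 3, $h\ge1$): (1) $\bar d^\pi_h\le d^\pi_h$ pointwise. (2) If for all $h'<h$ we have $d^\pi_{h'}\le C^{\mathbf x}_{h'}d^D_{h'}$ and $\pi_{h'}\le C^{\mathbf a}_{h'}\pi^D_{h'}$ pointwise, then $\bar d^\pi_h=d^\pi_h$. (3) $\|\bar d^\pi_h-d^\pi_h\|_1\le\|\bar d^\pi_{h-1}-d^\pi_{h-1}\|_1+\|\bar d^\pi_{h-1}-\bar d^\pi_{h-1}\wedge C^{\mathbf x}_{h-1}d^D_{h-1}\|_1+\|\mathbf P^\pi_{h-1}d^\pi_{h-1}-\mathbf P^{\bar\pi}_{h-1}d^\pi_{h-1}\|_1$.
   Context: Setting: finite-horizon episodic MDP with measurable state space $\mathcal X$, finite action space $\mathcal A$, $[H]=\{0,\dots,H-1\}$, transition densities $P_h(\cdot\mid x,a)$, initial distribution $d_0$; $d^\pi_h$ is the density of $x_h$ under the Markov policy $\pi=(\pi_h)$. Offline data: for each $h$, $\mathcal D_h$ consists of i.i.d. tuples $(x_h,a_h,x_{h+1})$ (conditionally on earlier data) generated by an arbitrary (possibly history-dependent) roll-in policy to $x_h$, then $a_h\sim\pi^D_h(\cdot\mid x_h)$ for a Markov single-step policy $\pi^D_h$, then $x_{h+1}\sim P_h$; $d^D_h$ is the marginal density of $x_h$ in $\mathcal D_h$. Notation: $a\wedge b=\min(a,b)$ pointwise; for $d:\mathcal X\to\mathbb R$ and nonnegative $\pi_h(a\mid x)$, $(\mathbf P^\pi_hd)(x'):=\iint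 P_h(x'\mid x,a)\pi_h(a\mid x)d(x)\mathrm dx\,\mathrm da$. Recursively clipped occupancy: given thresholds $C^{\mathbf x}_h,C^{\mathbf a}_h>0$, the pseudo-policy $\bar\pi_h:=\pi_h\wedge C^{\mathbf a}_h\pi^D_h$, $\bar d^\pi_0:=d_0$, and $\bar d^\pi_h:=\mathbf P^{\bar\pi}_{h-1}(\bar d^\pi_{h-1}\wedge C^{\mathbf x}_{h-1}d^D_{h-1})$ for $h\ge1$. *)

(* Defs.v *)
From HB Require Import structures.
From mathcomp Require Import all_boot all_order all_algebra.
From mathcomp Require Import all_classical all_reals all_analysis.
Set Implicit Arguments. Unset Strict Implicit. Unset Printing Implicit Defensive.
Import Order.TTheory GRing.Theory Num.Theory.
Local Open Scope classical_set_scope.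
Local Open Scope ring_scope.
Local Open Scope ereal_scope.

Section MDP.
Context {R : realType} {dX : measure_display} {X : measurableType dX}
        (mu : {measure set X -> \bar R}) {A : finType}.

(* (P^pol_h d)(x') = \int \sum_a P_h(x'|x,a) pol(a|x) d(x) dmu(x);
   P_h x a x' stands for the density P_h(x' | x, a) w.r.t. mu,
   pol x a for pol_h(a | x). *)
Definition Pop (Ph : X -> A -> X -> R) (pol : X -> A -> R)
    (d : X -> \bar R) : X -> \bar R :=
  fun x' => \int[mu]_x ((\sum_(a : A) (Ph x a x' * pol x a))%R%:E * d x).

Fixpoint occ (P : nat -> X -> A -> X -> R) (d0 : X -> R)
    (pi : nat -> X -> A -> R) (h : nat) : X -> \bar R :=
  match h with
  | 0%N => fun x => (d0 x)%:E
  | h'.+1 => Pop (P h') (pi h') (occ P d0 pi h')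
  end.

Definition pibar (pi piD : nat -> X -> A -> R) (Ca : nat -> R) :
    nat -> X -> A -> R :=
  fun h x a => Order.min (pi h x a) (Ca h * piD h x a)%R.

Definition clipx (dD : nat -> X -> R) (Cx : nat -> R) (h : nat)
    (d : X -> \bar R) : X -> \bar R :=
  fun x => Order.min (d x) ((Cx h * dD h x)%R%:E).

Fixpoint cocc (P : nat -> X -> A -> X -> R) (d0 : X -> R)
    (pi piD : nat -> X -> A -> R) (dD : nat -> X -> R) (Cx Ca : nat -> R)
    (h : nat) : X -> \bar R :=
  match h with
  | 0%N => fun x => (d0 x)%:E
  | h'.+1 => Pop (P h') (pibar pi piD Ca h')
                 (clipx dD Cx h' (cocc P d0 pi piD dD Cx Ca h'))
  end.

Definition L1dist (f g : X -> \bar R) : \bar R := \int[mu]_x `|f x - g x|.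

End MDP.

(* Main.v *)
Require Import Defs.
From HB Require Import structures.
From mathcomp Require Import all_boot all_order all_algebra.
From mathcomp Require Import all_classical all_reals all_analysis.
From mathcomp Require Import measurable_realfun.
From mathcomp Require Import lra.
Import Order.TTheory GRing.Theory Num.Theory.
Local Open Scope classical_set_scope.
Local Open Scope ring_scope.
Local Open Scope ereal_scope.

Section S.
Context {R : realType} {dX : measure_display} {X : measurableType dX}
        (mu : {measure set X -> \bar R}) (hs : sigma_finite setT mu) {A : finType}.
Definition smu : set X -> \bar R := mu.
HB.instance Definition _ := Measure.copy smu mu.
HB.instance Definition _ := @Measure_isSigmaFinite.Build _ X R smu hs.

Definition Kf (Ph : X -> A -> X -> R) (pol : X -> A -> R) (x x' : X) : R :=
  (\sum_(a : A) (Ph x a x' * pol x a))%R.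

Lemma mK (Ph : X -> A -> X -> R) (pol : X -> A -> R) : (forall a, measurable_fun setT (fun p : X * X => Ph p.1 a p.2)) ->
  (forall a, measurable_fun setT (fun x => pol x a)) ->
  measurable_fun setT (fun p : X * X => Kf Ph pol p.1 p.2).
Proof.
move=> mP mpol; apply: measurable_sum => a; apply: measurable_funM => //.
exact: (measurableT_comp (mpol a) measurable_fst).
Qed.

Lemma Pop_meas (Ph : X -> A -> X -> R) (pol : X -> A -> R) (d : X -> \bar R) : (forall a, measurable_fun setT (fun p : X * X => Ph p.1 a p.2)) ->
  (forall a, measurable_fun setT (fun x => pol x a)) ->
  (forall x x', (0 <= Kf Ph pol x x')%R) ->
  measurable_fun setT d -> (forall x, 0 <= d x) ->
  measurable_fun setT (Pop mu Ph pol d).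
Proof.
move=> mP mpol K0 md d0.
pose f := (fun p : X * X => (Kf Ph pol p.1 p.2)%:E * d p.1).
have mf : measurable_fun setT f.
  apply: emeasurable_funM; first by apply/measurable_EFinP; exact: mK.
  exact: (measurableT_comp md measurable_fst).
have f0 : forall p, 0 <= f p by move=> p; rewrite /f mule_ge0 ?lee_fin.
exact: (@measurable_fun_fubini_tonelli_G _ _ X X R smu f mf f0).
Qed.

Lemma mKx (Ph : X -> A -> X -> R) (pol : X -> A -> R) x' :
  (forall a, measurable_fun setT (fun p : X * X => Ph p.1 a p.2)) ->
  (forall a, measurable_fun setT (fun x => pol x a)) ->
  measurable_fun setT (fun x => (Kf Ph pol x x')%:E).
Proof.
move=> mP mpol; apply/measurable_EFinP.
have := measurable_fun_pair1 x' (mK _ _ mP mpol).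
by [].
Qed.

Lemma mKy (Ph : X -> A -> X -> R) (pol : X -> A -> R) x :
  (forall a, measurable_fun setT (fun p : X * X => Ph p.1 a p.2)) ->
  (forall a, measurable_fun setT (fun x => pol x a)) ->
  measurable_fun setT (fun x' => (Kf Ph pol x x')%:E).
Proof.
move=> mP mpol; apply/measurable_EFinP.
have := measurable_fun_pair2 x (mK _ _ mP mpol).
by [].
Qed.

Lemma Kf_ge0 (Ph : X -> A -> X -> R) (pol : X -> A -> R) x x' : (forall a, 0 <= Ph x a x')%R -> (forall a, 0 <= pol x a)%R ->
  (0 <= Kf Ph pol x x')%R.
Proof. by move=> h1 h2; apply: sumr_ge0 => a _; exact: mulr_ge0 (h1 a) (h2 a). Qed.

Lemma Pop_ge0 (Ph : X -> A -> X -> R) (pol : X -> A -> R) (d : X -> \bar R) x' : (forall x x', 0 <= Kf Ph pol x x')%R -> (forall x, 0 <= d x) ->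
  0 <= Pop mu Ph pol d x'.
Proof. by move=> K0 d0; apply: integral_ge0 => x _; rewrite mule_ge0 ?lee_fin ?K0. Qed.

Lemma Pop_le (Ph : X -> A -> X -> R) (pol1 pol2 : X -> A -> R) (d1 d2 : X -> \bar R) (x' : X) :
  (forall a, measurable_fun setT (fun p : X * X => Ph p.1 a p.2)) ->
  (forall a, measurable_fun setT (fun x => pol1 x a)) ->
  (forall a, measurable_fun setT (fun x => pol2 x a)) ->
  (forall x a x', 0 <= Ph x a x')%R ->
  (forall x a, 0 <= pol1 x a <= pol2 x a)%R ->
  measurable_fun setT d1 -> measurable_fun setT d2 ->
  (forall x, 0 <= d1 x <= d2 x) ->
  Pop mu Ph pol1 d1 x' <= Pop mu Ph pol2 d2 x'.
Proof.
move=> mP m1 m2 P0 p12 md1 md2 d12.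
have pol10 x a : (0 <= pol1 x a)%R by case/andP: (p12 x a).
have pol20 x a : (0 <= pol2 x a)%R by case/andP: (p12 x a) => /le_trans h /h.
have d10 x : 0 <= d1 x by case/andP: (d12 x).
apply: ge0_le_integral => //.
- by move=> x _; rewrite mule_ge0 ?lee_fin ?Kf_ge0.

- by apply: emeasurable_funM => //; exact: (mKx _ _ _ mP m1).
- by apply: emeasurable_funM => //; exact: (mKx _ _ _ mP m2).
- move=> x _; apply: lee_pmul; rewrite ?lee_fin ?Kf_ge0 //.
  + by apply: ler_sum => a _; apply: ler_wpM2l => //; case/andP: (p12 x a).
  + by case/andP: (d12 x).
Qed.

Lemma intK (Ph : X -> A -> X -> R) (pol : X -> A -> R) (x : X) :
  (forall a, measurable_fun setT (fun p : X * X => Ph p.1 a p.2)) ->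
  (forall a x', 0 <= Ph x a x')%R -> (forall a, 0 <= pol x a)%R ->
  (forall a, \int[mu]_x' (Ph x a x')%:E = 1) ->
  \int[mu]_x' (Kf Ph pol x x')%:E = (\sum_(a : A) pol x a)%:E.
Proof.
move=> mP P0 p0 P1; rewrite /Kf.
under eq_integral do rewrite -sumEFin.
rewrite ge0_integral_sum //; last first.
  by move=> a y _; rewrite lee_fin mulr_ge0.
  by move=> a; apply/measurable_EFinP; apply: measurable_funM => //;
    exact: (measurable_fun_pair2 x (mP a)).
rewrite -sumEFin; apply: eq_bigr => a _.
under eq_integral do rewrite EFinM.
rewrite ge0_integralZr //.
- by rewrite P1 mul1e.
- by apply/measurable_EFinP; exact: (measurable_fun_pair2 x (mP a)).
- by move=> y _; rewrite lee_fin.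
- by rewrite lee_fin.
Qed.

Lemma Pop_mass (Ph : X -> A -> X -> R) (pol : X -> A -> R) (e : X -> \bar R) :
  (forall a, measurable_fun setT (fun p : X * X => Ph p.1 a p.2)) ->
  (forall a, measurable_fun setT (fun x => pol x a)) ->
  (forall x a x', 0 <= Ph x a x')%R -> (forall x a, 0 <= pol x a)%R ->
  (forall x a, \int[mu]_x' (Ph x a x')%:E = 1) ->
  (forall x, \sum_(a : A) pol x a <= 1)%R ->
  measurable_fun setT e -> (forall x, 0 <= e x) ->
  \int[mu]_x' Pop mu Ph pol e x' <= \int[mu]_x e x.
Proof.
move=> mP mpol P0 p0 P1 s1 me e0.
pose f := (fun p : X * X => (Kf Ph pol p.1 p.2)%:E * e p.1).
have mf : measurable_fun setT f.
  apply: emeasurable_funM; first by apply/measurable_EFinP; exact: mK.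
  exact: (measurableT_comp me measurable_fst).
have f0 : forall p, 0 <= f p by move=> p; rewrite /f mule_ge0 ?lee_fin ?Kf_ge0.
have -> : \int[mu]_x' Pop mu Ph pol e x' = \int[mu]_x \int[mu]_y f (x, y).
  have := @fubini_tonelli _ _ X X R smu smu f mf f0.
  by move=> ->.
apply: ge0_le_integral => //.
- by move=> x _; apply: integral_ge0 => y _; exact: f0.
- exact: (@measurable_fun_fubini_tonelli_F _ _ X X R smu f mf f0).
- move=> x _; rewrite /f /=.
  case ex: (e x) => [r||].
  + have r0 : (0 <= r)%R by rewrite -lee_fin -ex.
    rewrite ge0_integralZr //.
    * rewrite (intK _ _ _ mP (fun a x' => P0 x a x') (p0 x) (P1 x)).
      by apply: gee_pMl; rewrite ?lee_fin.
    * exact: (mKy _ _ _ mP mpol).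
    * by move=> y _; rewrite lee_fin Kf_ge0.
  + exact: leey.
  + by have := e0 x; rewrite ex.
Qed.

Lemma abse_tri (a b c : \bar R) : a - c <= `|b - a| + `|b - c|.
Proof.
case: a => [a||]; case: b => [b||]; case: c => [c||] //=.
all: try (rewrite ?leey ?leNye //; fail).
rewrite -EFinD -EFinD lee_fin.
apply: (le_trans (ler_norm _)).
rewrite (_ : (a - c = (a - b) + (b - c))%R); last by rewrite addrA subrK.
by rewrite (le_trans (ler_normD _ _)) // distrC.
Qed.

Lemma abse_key (a b c D : \bar R) : 0 <= a -> 0 <= D -> b = a + D -> b <= c ->
  `|a - c| <= D + `|c - b|.
Proof.
case: a => [a||]; case: D => [D||]; case: c => [c||] //= a0 D0 -> //=.
all: try (rewrite ?leey ?leNye //; fail).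
rewrite -EFinD !lee_fin => h.
move: a0 D0; rewrite !lee_fin => a0 D0.
rewrite distrC !ger0_norm; [lra|lra|lra].
Qed.

Variables (H : nat) (P : nat -> X -> A -> X -> R) (d0 : X -> R)
  (piD : nat -> X -> A -> R) (dD : nat -> X -> R) (Cx Ca : nat -> R)
  (pi : nat -> X -> A -> R).
Hypothesis hPm : forall h a, (h < H)%N ->
     measurable_fun setT (fun p : X * X => P h p.1 a p.2).
Hypothesis hP0 : forall h x a x', (h < H)%N -> (0 <= P h x a x')%R.
Hypothesis hP1 : forall h x a, (h < H)%N -> \int[mu]_x' (P h x a x')%:E = 1.
Hypothesis hd0m : measurable_fun setT d0.
Hypothesis hd00 : forall x, (0 <= d0 x)%R.
Hypothesis hpiDm : forall h a, (h < H)%N -> measurable_fun setT (fun x => piD h x a).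
Hypothesis hpiD0 : forall h x a, (h < H)%N -> (0 <= piD h x a)%R.
Hypothesis hdDm : forall h, (h < H)%N -> measurable_fun setT (dD h).
Hypothesis hdD0 : forall h x, (h < H)%N -> (0 <= dD h x)%R.
Hypothesis hCx : forall h, (h < H)%N -> (0 < Cx h)%R.
Hypothesis hCa : forall h, (h < H)%N -> (0 < Ca h)%R.
Hypothesis hpim : forall h a, (h < H)%N -> measurable_fun setT (fun x => pi h x a).
Hypothesis hpi0 : forall h x a, (h < H)%N -> (0 <= pi h x a)%R.
Hypothesis hpi1 : forall h x, (h < H)%N -> (\sum_(a : A) pi h x a)%R = 1%R.

Local Notation o := (occ mu P d0 pi).
Local Notation c := (cocc mu P d0 pi piD dD Cx Ca).
Local Notation pb := (pibar pi piD Ca).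
Local Notation cl := (clipx dD Cx).

Lemma pb_prop k x a : (k < H)%N -> (0 <= pb k x a <= pi k x a)%R.
Proof.
move=> kH; rewrite /pibar le_min ge_min lexx /= andbT hpi0 //=.
by rewrite mulr_ge0 // ?hpiD0 // ltW // hCa.
Qed.

Lemma pb_meas k a : (k < H)%N -> measurable_fun setT (fun x => pb k x a).
Proof.
move=> kH; apply: measurable_minr; first exact: hpim.
by apply: measurable_funM => //; exact: hpiDm.
Qed.

Lemma pb_sum k x : (k < H)%N -> (\sum_(a : A) pb k x a <= 1)%R.
Proof.
move=> kH; rewrite -(hpi1 k x kH); apply: ler_sum => a _.
by case/andP: (pb_prop k x a kH).
Qed.

Lemma cl_prop k (e : X -> \bar R) x : (k < H)%N -> 0 <= e x ->
  [/\ 0 <= cl k e x, cl k e x <= e x & cl k e x \is a fin_num].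
Proof.
move=> kH e0; have C0 : (0 <= Cx k * dD k x)%R by rewrite mulr_ge0 ?hdD0 // ltW ?hCx.
have h1 : 0 <= cl k e x by rewrite /clipx le_min e0 lee_fin C0.
split => //; first by rewrite /clipx ge_min lexx.
rewrite ge0_fin_numE //; apply: (le_lt_trans _ (ltey (Cx k * dD k x)%:E)).
by rewrite /clipx ge_min lexx orbT.
Qed.

Lemma cl_meas k (e : X -> \bar R) : (k < H)%N -> measurable_fun setT e ->
  measurable_fun setT (cl k e).
Proof.
move=> kH me; apply: measurable_mine => //; apply/measurable_EFinP.
by apply: measurable_funM => //; exact: hdDm.
Qed.

Lemma occ_prop k : (k <= H)%N -> (forall x, 0 <= o k x) /\ measurable_fun setT (o k).
Proof.
elim: k => [_|k IH kH] /=.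
  by split; [move=> x; rewrite lee_fin | exact/measurable_EFinP].
have kH' : (k < H)%N by [].
have [Ho0 Hom] := IH (ltnW kH').
have K0 x x' : (0 <= Kf (P k) (pi k) x x')%R by apply: Kf_ge0 => a; [exact: hP0|exact: hpi0].
split; first by move=> x; exact: Pop_ge0.
apply: (Pop_meas _ _ _ _ _ K0) => //.
- by move=> a; exact: hPm.
- by move=> a; exact: hpim.
Qed.

Lemma cocc_prop k : (k <= H)%N ->
  [/\ (forall x, 0 <= c k x), measurable_fun setT (c k) & (forall x, c k x <= o k x)].
Proof.
elim: k => [_|k IH kH] /=.
  by split; [move=> x; rewrite lee_fin | exact/measurable_EFinP | move=> x].
have kH' : (k < H)%N by [].
have [c0 cm co] := IH (ltnW kH').
have [Ho0 Hom] := occ_prop k (ltnW kH').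
have K0 x x' : (0 <= Kf (P k) (pb k) x x')%R.
  by apply: Kf_ge0 => a; [exact: hP0|case/andP: (pb_prop k x a kH')].
split.
- by move=> x; apply: Pop_ge0 => // y; case: (cl_prop k _ y kH' (c0 y)).
- apply: (Pop_meas _ _ _ _ _ K0).
  + by move=> a; exact: hPm.
  + by move=> a; exact: pb_meas.
  + exact: cl_meas.
  + by move=> y; case: (cl_prop k _ y kH' (c0 y)).
- move=> x; apply: Pop_le => //.
  + by move=> a; exact: hPm.
  + by move=> a; exact: pb_meas.
  + by move=> a; exact: hpim.
  + by move=> y a y'; exact: hP0.
  + by move=> y a; exact: pb_prop.
  + exact: cl_meas.
  + move=> y; case: (cl_prop k _ y kH' (c0 y)) => h1 h2 _.
    by rewrite h1 /= (le_trans h2 (co y)).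
Qed.

Lemma claim2 k : (k <= H)%N ->
  (forall h', (h' < k)%N ->
     (forall x, o h' x <= (Cx h' * dD h' x)%:E) /\
     (forall x a, (pi h' x a <= Ca h' * piD h' x a)%R)) ->
  forall x, c k x = o k x.
Proof.
elim: k => [//|k IH kH hyp x] /=.
have IH' := IH (ltnW kH) (fun h' hk => hyp h' (ltnW hk)).
have -> : cocc mu P d0 pi piD dD Cx Ca k = occ mu P d0 pi k.
  by apply/funext => y; exact: IH'.
have [h1 h2] := hyp k (ltnSn k).
have -> : cl k (o k) = o k by apply/funext => y; rewrite /clipx min_l.
have -> : pb k = pi k.
  by apply/funext => y; apply/funext => a; rewrite /pibar min_l.
by [].
Qed.

Lemma claim3 k : (k.+1 < H)%N ->
  L1dist mu (c k.+1) (o k.+1)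
  <= L1dist mu (c k) (o k) + L1dist mu (c k) (cl k (c k))
     + L1dist mu (Pop mu (P k) (pi k) (o k)) (Pop mu (P k) (pb k) (o k)).
Proof.
move=> kH1.
have kH : (k < H)%N by apply: ltn_trans kH1.
have kH' : (k <= H)%N by apply: ltnW.
have [c0 cm co] := cocc_prop k kH'.
have [Ho0 Hom] := occ_prop k kH'.
pose e := cl k (c k).
have e0 x : 0 <= e x by case: (cl_prop k _ x kH (c0 x)).
have ec x : e x <= c k x by case: (cl_prop k _ x kH (c0 x)).
have ef x : e x \is a fin_num by case: (cl_prop k _ x kH (c0 x)).
have em : measurable_fun setT e by exact: cl_meas.
have de0 x : 0 <= o k x - e x by rewrite sube_ge0 ?ef // (le_trans (ec x) (co x)).
have dem : measurable_fun setT (fun x => o k x - e x) by exact: emeasurable_funB.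
have Pm a : measurable_fun setT (fun p : X * X => P k p.1 a p.2) by exact: hPm.
have pbm a : measurable_fun setT (fun x => pb k x a) by exact: pb_meas.
have pim a : measurable_fun setT (fun x => pi k x a) by exact: hpim.
have Kb0 x x' : (0 <= Kf (P k) (pb k) x x')%R.
  by apply: Kf_ge0 => a; [exact: hP0|case/andP: (pb_prop k x a kH)].
have K0 x x' : (0 <= Kf (P k) (pi k) x x')%R.
  by apply: Kf_ge0 => a; [exact: hP0|exact: hpi0].
pose F := Pop mu (P k) (pb k) e.
pose G := Pop mu (P k) (pb k) (o k).
pose Hf := Pop mu (P k) (pi k) (o k).
pose Df := Pop mu (P k) (pb k) (fun x => o k x - e x).
have Fm : measurable_fun setT F by exact: (Pop_meas _ _ _ _ _ Kb0).
have Gm : measurable_fun setT G by exact: (Pop_meas _ _ _ _ _ Kb0).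
have Hm : measurable_fun setT Hf by exact: (Pop_meas _ _ _ _ _ K0).
have Dm : measurable_fun setT Df by exact: (Pop_meas _ _ _ _ _ Kb0).
have GFD x' : G x' = F x' + Df x'.
  rewrite /G /F /Df /Pop -ge0_integralD //.
  - apply: eq_integral => x _; rewrite -ge0_muleDr //.
    by rewrite addeC subeK.
  - by move=> x _; apply: mule_ge0 => //; rewrite lee_fin; exact: Kb0.
  - by apply: emeasurable_funM => //; exact: (mKx _ _ _ Pm pbm).
  - by move=> x _; apply: mule_ge0 => //; rewrite lee_fin; exact: Kb0.
  - by apply: emeasurable_funM => //; exact: (mKx _ _ _ Pm pbm).
have GH x' : G x' <= Hf x'.
  apply: Pop_le => //.
  + by move=> y a y'; exact: hP0.
  + by move=> y a; exact: pb_prop.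
  + by move=> y; rewrite Ho0 lexx.
have pt x' : `|F x' - Hf x'| <= Df x' + `|Hf x' - G x'|.
  apply: abse_key => //; [exact: Pop_ge0|exact: Pop_ge0].
rewrite /L1dist.
have -> : \int[mu]_x `|c k.+1 x - o k.+1 x| = \int[mu]_x `|F x - Hf x| by [].
apply: le_trans (ge0_le_integral _ _ _ _ _ (fun x _ => pt x)) _ => //.
- apply: measurableT_comp; first exact: abse_measurable.
  exact: emeasurable_funB.
- apply: emeasurable_funD => //; apply: measurableT_comp; first exact: abse_measurable.
  exact: emeasurable_funB.
have absm (f g : X -> \bar R) : measurable_fun setT f -> measurable_fun setT g ->
    measurable_fun setT (fun x => `|f x - g x|).
  move=> mf mg; apply: measurableT_comp; first exact: abse_measurable.
  exact: emeasurable_funB.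
rewrite ge0_integralD //; first last.
  exact: absm.
  by move=> x _; exact: Pop_ge0.
apply: leeD; last exact: lexx.
apply: (le_trans (Pop_mass _ _ _ Pm pbm _ _ _ _ dem de0)).
- by move=> x a x'; exact: hP0.
- by move=> x a; case/andP: (pb_prop k x a kH).
- by move=> x a; exact: hP1.
- by move=> x; exact: pb_sum.
rewrite -ge0_integralD //; first last.
  exact: (absm _ _ cm em).
  exact: (absm _ _ cm Hom).
apply: ge0_le_integral => //.
- by apply: emeasurable_funD; [exact: (absm _ _ cm Hom)|exact: (absm _ _ cm em)].
- by move=> x _; exact: abse_tri.
Qed.
End S.

Theorem proposition2 (R : realType) (dX : measure_display) (X : measurableType dX)
  (mu : {measure set X -> \bar R}) (A : finType) (H : nat)
  (P : nat -> X -> A -> X -> R) (d0 : X -> R)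
  (piD : nat -> X -> A -> R) (dD : nat -> X -> R) (Cx Ca : nat -> R)
  (pi : nat -> X -> A -> R) :
  sigma_finite setT mu ->
  (* transition densities *)
  (forall h a, (h < H)%N ->
     measurable_fun setT (fun p : X * X => P h p.1 a p.2)) ->
  (forall h x a x', (h < H)%N -> (0 <= P h x a x')%R) ->
  (forall h x a, (h < H)%N -> \int[mu]_x' (P h x a x')%:E = 1) ->
  (* initial distribution *)
  measurable_fun setT d0 -> (forall x, (0 <= d0 x)%R) ->
  \int[mu]_x (d0 x)%:E = 1 ->
  (* data policy and data state densities *)
  (forall h a, (h < H)%N -> measurable_fun setT (fun x => piD h x a)) ->
  (forall h x a, (h < H)%N -> (0 <= piD h x a)%R) ->
  (forall h x, (h < H)%N -> (\sum_(a : A) piD h x a)%R = 1%R) ->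
  (forall h, (h < H)%N -> measurable_fun setT (dD h)) ->
  (forall h x, (h < H)%N -> (0 <= dD h x)%R) ->
  (forall h, (h < H)%N -> \int[mu]_x (dD h x)%:E = 1) ->
  (* thresholds *)
  (forall h, (h < H)%N -> (0 < Cx h)%R) ->
  (forall h, (h < H)%N -> (0 < Ca h)%R) ->
  (* the Markov policy pi *)
  (forall h a, (h < H)%N -> measurable_fun setT (fun x => pi h x a)) ->
  (forall h x a, (h < H)%N -> (0 <= pi h x a)%R) ->
  (forall h x, (h < H)%N -> (\sum_(a : A) pi h x a)%R = 1%R) ->
  forall h, (h < H)%N ->
  [/\ (* (1) *)
      (forall x, cocc mu P d0 pi piD dD Cx Ca h x <= occ mu P d0 pi h x),
      (* (2) *)
      ((forall h', (h' < h)%N ->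
          (forall x, occ mu P d0 pi h' x <= (Cx h' * dD h' x)%:E) /\
          (forall x a, (pi h' x a <= Ca h' * piD h' x a)%R)) ->
       forall x, cocc mu P d0 pi piD dD Cx Ca h x = occ mu P d0 pi h x)
    & (* (3) *)
      ((1 <= h)%N ->
       L1dist mu (cocc mu P d0 pi piD dD Cx Ca h) (occ mu P d0 pi h)
       <= L1dist mu (cocc mu P d0 pi piD dD Cx Ca h.-1) (occ mu P d0 pi h.-1)
          + L1dist mu (cocc mu P d0 pi piD dD Cx Ca h.-1)
                      (clipx dD Cx h.-1 (cocc mu P d0 pi piD dD Cx Ca h.-1))
          + L1dist mu (Pop mu (P h.-1) (pi h.-1) (occ mu P d0 pi h.-1))
                      (Pop mu (P h.-1) (pibar pi piD Ca h.-1) (occ mu P d0 pi h.-1)))].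
Proof.
move=> hs hPm hP0 hP1 hd0m hd00 _ hpiDm hpiD0 _ hdDm hdD0 _ hCx hCa hpim hpi0 hpi1 h hH.
split.
- have := @cocc_prop _ _ _ mu hs _ H P d0 piD dD Cx Ca pi hPm hP0 hd0m hd00
    hpiDm hpiD0 hdDm hdD0 hCx hCa hpim hpi0 h (ltnW hH).
  by case.
- exact: (@claim2 _ _ _ mu _ H P d0 piD dD Cx Ca pi h (ltnW hH)).
- case: h hH => [//|k] hH _ /=.
  exact: (@claim3 _ _ _ mu hs _ H P d0 piD dD Cx Ca pi hPm hP0 hP1 hd0m hd00
    hpiDm hpiD0 hdDm hdD0 hCx hCa hpim hpi0 hpi1 k hH).
Qed.
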